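(* Let $S$ be a semigroup, $I, J$ sets and $P$ a $J\times I$ matrix, and let $M$ be either $M(S; I, J; P)$ (entries of $P$ in $S$) or $M^0(S; I, J; P)$ (entries of $P$ in $S \cup \{0\}$), and suppose $M$ is finitely generated. Choose $i \in I$ and $j \in J$ with $P_{ji} \neq 0$ such that for every $j' \in J$ we have $P_{j'i} = 0$ or $S P_{j'i} \subseteq S P_{ji}$, and let $T = \{(i, s, j) : s \in S\} \subseteq M$. Let $\sigma : X^+ \to T$ and $\tau : Y^+ \to M$ be choices of generators such that $X \subseteq Y$ and $\sigma$ is the restriction of $\tau$ to $X^+$. Then $L_\sigma(T) = L_\tau(M) \cap \hat{X}^*$.
   Context: The Rees matrix semigroup with zero $M^0(S; I, J; P)$ (where $0 \notin S$) has elements $(I \times S \times J) \cup \{0\}$, $0$ is a zero, and $(i_1, g_1, j_1)(i_2, g_2, j_2) = (i_1, g_1 P_{j_1 i_2} g_2, j_2)$ if $P_{j_1 i_2} \in S$ and $=0$ if $P_{j_1 i_2} = 0$. If $P$ has no zero entries, $M(S;I,J;P)$ is the subsemigroup $I \times S \times J$. For a semigroup $S$, $S^1$ denotes the monoid obtained by adjoining a new identity $1$ (even if $S$ already has one). A choice of generators for $S$ is a surjective morphism $\sigma : X^+ \to S$ from a free semigroup; it extends uniquely to $\sigma^1 : X^* \to S^1$. Let $\overline{X} = \{\overline{x} : x \in X\}$ be a set of formal inverses, $\hat{X} = X \cup \overline{X}$. The loop automaton of $S$ with respect to $\sigma$ is the directed labelled graph with vertex set $S^1$, having for each $a \in S^1$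 and $x \in X$ an edge from $a$ to $a(x\sigma)$ labelled $x$ and an edge from $a(x\sigma)$ to $a$ labelled $\overline{x}$. The loop problem $L_\sigma(S) \subseteq \hat{X}^*$ is the set of words labelling paths from $1$ to $1$ in this graph (including the empty word). *)

(* Defs.v *)
From Stdlib Require Import List.
Import ListNotations.
Set Implicit Arguments.

Definition associative_op {A : Type} (mul : A -> A -> A) : Prop :=
  forall a b c, mul a (mul b c) = mul (mul a b) c.

(** Value under a choice of generators [gen : X -> A] of the nonempty word
    [x :: w] in [X^+]  (i.e. the unique morphism X^+ -> A extending gen). *)
Definition eval_word {A X : Type} (mul : A -> A -> A) (gen : X -> A)
  (x : X) (w : list X) : A :=
  fold_left (fun a y => mul a (gen y)) w (gen x).

Definition generators_of {A X : Type} (mul : A -> A -> A) (V : A -> Prop)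
  (gen : X -> A) : Prop :=
  (forall x, V (gen x)) /\
  (forall a, V a -> exists x w, eval_word mul gen x w = a).

Definition finitely_generated {A : Type} (mul : A -> A -> A) : Prop :=
  exists l : list A, forall a : A, exists x w,
    In x l /\ Forall (fun y => In y l) w /\ eval_word mul (fun z => z) x w = a.

(** Letters of X^ = X ∪ X̄ : [inl x] is x, [inr x] is the formal inverse x̄. *)
Definition hat (X : Type) := (X + X)%type.

(** Right multiplication in V^1 = V ∪ {1}, with [None] the adjoined identity. *)
Definition mul1 {A : Type} (mul : A -> A -> A) (a : option A) (b : A) : A :=
  match a with None => b | Some a' => mul a' b end.

Definition vert {A : Type} (V : A -> Prop) (u : option A) : Prop :=
  match u with None => True | Some a => V a end.

(** Paths in the loop automaton of the subsemigroup [V] (closed under [mul])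
    of [A] w.r.t. [gen : X -> V]: vertex set V^1 (encoded as [option A] with
    vertices restricted to [V]); for each vertex a and x in X there is an edge
    a --x--> a(x gen) and an edge a(x gen) --x̄--> a. *)
Inductive lpath {A X : Type} (mul : A -> A -> A) (V : A -> Prop) (gen : X -> A)
  : option A -> list (hat X) -> option A -> Prop :=
| lp_nil u : vert V u -> lpath mul V gen u [] u
| lp_fwd a x w v : vert V a -> V (mul1 mul a (gen x)) ->
    lpath mul V gen (Some (mul1 mul a (gen x))) w v ->
    lpath mul V gen a (inl x :: w) v
| lp_bwd a x w v : vert V a -> V (mul1 mul a (gen x)) ->
    lpath mul V gen a w v ->
    lpath mul V gen (Some (mul1 mul a (gen x))) (inr x :: w) v.

Definition loop_problem {A X : Type} (mul : A -> A -> A) (V : A -> Prop)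
  (gen : X -> A) (w : list (hat X)) : Prop :=
  lpath mul V gen None w None.

Definition hat_map {X Y : Type} (f : X -> Y) (w : list (hat X)) : list (hat Y) :=
  map (fun l => match l with inl x => inl (f x) | inr x => inr (f x) end) w.

(** M^0(S; I, J; P), P : J -> I -> S ∪ {0} (None = 0); element 0 is [None]. *)
Definition rees0_mul {S I J : Type} (mulS : S -> S -> S) (P : J -> I -> option S)
  (a b : option (I * S * J)) : option (I * S * J) :=
  match a, b with
  | Some (i1, g1, j1), Some (i2, g2, j2) =>
      match P j1 i2 with
      | Some p => Some (i1, mulS (mulS g1 p) g2, j2)
      | None => None
      end
  | _, _ => None
  end.

Definition rees_mul {S I J : Type} (mulS : S -> S -> S) (P : J -> I -> S)
  (a b : I * S * J) : I * S * J :=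
  match a, b with
  | (i1, g1, j1), (i2, g2, j2) => (i1, mulS (mulS g1 (P j1 i2)) g2, j2)
  end.

Definition left_mult_sub {S : Type} (mulS : S -> S -> S) (p' p : S) : Prop :=
  forall s : S, exists t : S, mulS s p' = mulS t p.

(* Main.v *)
Require Import Defs.
From Stdlib Require Import List Classical.
Import ListNotations.

Lemma lpath_transfer {A X Y : Type} (mul : A -> A -> A) (V V' : A -> Prop)
  (iota : X -> Y) (g : Y -> A) u w v :
  lpath mul V (fun x => g (iota x)) u w v ->
  (forall a, V a -> V' a) ->
  lpath mul V' g u (hat_map iota w) v.
Proof.
  intros H HV. induction H; simpl.
  - constructor. destruct u; simpl in *; auto.
  - apply lp_fwd; auto. destruct a; simpl in *; auto.
  - apply lp_bwd; auto. destruct a; simpl in *; auto.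
Qed.

Lemma hat_map_inl {X Y} (iota : X -> Y) y w0 w :
  inl y :: w0 = hat_map iota w ->
  exists x w1, w = inl x :: w1 /\ y = iota x /\ w0 = hat_map iota w1.
Proof.
  destruct w as [|[x|x] w]; simpl; intro H; try discriminate.
  injection H; intros; subst; eauto.
Qed.

Lemma hat_map_inr {X Y} (iota : X -> Y) y w0 w :
  inr y :: w0 = hat_map iota w ->
  exists x w1, w = inr x :: w1 /\ y = iota x /\ w0 = hat_map iota w1.
Proof.
  destruct w as [|[x|x] w]; simpl; intro H; try discriminate.
  injection H; intros; subst; eauto.
Qed.

Section Zero.
Variables (S I J : Type) (mulS : S -> S -> S) (P : J -> I -> option S)
     (i : I) (j : J) (X Y : Type) (iota : X -> Y) (tau : Y -> option (I * S * J)).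
Hypothesis assoc : associative_op mulS.
Hypothesis Hji : P j i <> None.
Hypothesis Hleft : forall j' : J, P j' i = None \/
        exists p' p, P j' i = Some p' /\ P j i = Some p /\ left_mult_sub mulS p' p.
Hypothesis Hgen : forall x, exists s, tau (iota x) = Some (i, s, j).

Let VT := fun m : option (I * S * J) => exists s : S, m = Some (i, s, j).

Definition R0 (v u : option (option (I * S * J))) : Prop :=
  (v = u /\ vert VT v) \/
  exists t j' p' t' p, v = Some (Some (i, t, j')) /\ j' <> j /\ P j' i = Some p' /\
     P j i = Some p /\ u = Some (Some (i, t', j)) /\ mulS t p' = mulS t' p.

Lemma back0 v w' v' :
  lpath (rees0_mul mulS P) (fun _ => True) tau v w' v' -> v' = None ->
  forall w, w' = hat_map iota w -> forall u, R0 v u ->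
  lpath (rees0_mul mulS P) VT (fun x => tau (iota x)) u w None.
Proof.
  induction 1; intros Hv' w0 Hw u0 HR.
  - subst. destruct w0; simpl in Hw; try discriminate.
    destruct HR as [[<- _]|[t [j' [p' [t' [p [E _]]]]]]]; [|discriminate].
    constructor. exact Logic.I.
  - destruct (hat_map_inl _ _ _ _ Hw) as [x0 [w1 [-> [-> ->]]]].
    destruct (Hgen x0) as [s2 Hs2].
    assert (Hm : Some (mul1 (rees0_mul mulS P) a (tau (iota x0))) =
                 Some (mul1 (rees0_mul mulS P) u0 (tau (iota x0))) /\
                 VT (mul1 (rees0_mul mulS P) u0 (tau (iota x0)))).
    { destruct HR as [[<- Hva]|[t [j' [p' [t' [p [-> [_ [Hp' [Hp [-> Ht]]]]]]]]]]].
      - split; [reflexivity|]. destruct a as [m|]; simpl in *.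
        + destruct Hva as [s ->]. rewrite Hs2. simpl.
          destruct (P j i) eqn:E; [|congruence]. eexists; reflexivity.
        + rewrite Hs2. eexists; reflexivity.
      - simpl. rewrite Hs2. simpl. rewrite Hp', Hp. split.
        + rewrite Ht. reflexivity.
        + eexists; reflexivity. }
    destruct Hm as [Hm1 Hm2].
    apply lp_fwd.
    + destruct HR as [[<- Hva]|[t [j' [p' [t' [p [_ [_ [_ [_ [-> _]]]]]]]]]]]; auto.
      simpl. eexists; reflexivity.
    + exact Hm2.
    + apply IHlpath; auto. rewrite Hm1. left. auto.
  - destruct (hat_map_inr _ _ _ _ Hw) as [x0 [w1 [-> [-> ->]]]].
    destruct (Hgen x0) as [s2 Hs2].
    destruct HR as [[<- Hvb]|[t [j' [p' [t' [p [E [Hne _]]]]]]]].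
    2:{ exfalso. injection E as E. destruct a as [[[[i1 t1] j1]|]|]; simpl in E;
        try rewrite Hs2 in E; simpl in E; try discriminate.
        all: rewrite ?Hs2 in E; simpl in E; try discriminate; try (injection E; intros; subst; congruence).
        all: destruct (P j1 i); try discriminate; injection E; intros; subst; congruence.
    }
    simpl in Hvb.
    destruct a as [[[[i1 t1] j1]|]|].
    + simpl in Hvb |- *. rewrite Hs2 in Hvb |- *. simpl in Hvb |- *.
      destruct (P j1 i) as [p'|] eqn:Ep'.
      2:{ destruct Hvb as [? E]; discriminate. }
      destruct Hvb as [s3 E]. injection E; intros; subst i1.
      destruct (classic (j1 = j)) as [->|Hne].
      * assert (H' := @lp_bwd _ _ (rees0_mul mulS P) VT (fun x => tau (iota x))
                  (Some (Some (i, t1, j))) x0 w1 None).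
        simpl in H'. rewrite Hs2, Ep' in H'. apply H'.
        -- eexists; reflexivity.
        -- eexists; reflexivity.
        -- apply IHlpath; auto. left. split; auto. eexists; reflexivity.
      * destruct (Hleft j1) as [E1|[p1 [p [E1 [E2 Hl]]]]]; [congruence|].
        rewrite Ep' in E1. injection E1 as <-.
        destruct (Hl t1) as [t' Ht'].
        assert (H' := @lp_bwd _ _ (rees0_mul mulS P) VT (fun x => tau (iota x))
                  (Some (Some (i, t', j))) x0 w1 None).
        simpl in H'. rewrite Hs2, E2 in H'. rewrite Ht'. apply H'.
        -- eexists; reflexivity.
        -- eexists; reflexivity.
        -- apply IHlpath; auto. right. do 5 eexists. repeat split; eauto.
    + exfalso. simpl in Hvb. destruct Hvb; discriminate.
    + simpl. assert (H' := @lp_bwd _ _ (rees0_mul mulS P) VT (fun x => tau (iota x))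
                  None x0 w1 None). simpl in H'. apply H'.
      * exact Logic.I.
      * eexists; eauto.
      * apply IHlpath; auto. left. split; auto; exact Logic.I.
Qed.
End Zero.

Section NoZero.
Variables (S I J : Type) (mulS : S -> S -> S) (P : J -> I -> S)
     (i : I) (j : J) (X Y : Type) (iota : X -> Y) (tau : Y -> I * S * J).
Hypothesis assoc : associative_op mulS.
Hypothesis Hleft : forall j' : J, left_mult_sub mulS (P j' i) (P j i).
Hypothesis Hgen : forall x, exists s, tau (iota x) = (i, s, j).

Let VT := fun m : I * S * J => exists s : S, m = (i, s, j).

Definition R1 (v u : option (I * S * J)) : Prop :=
  (v = u /\ vert VT v) \/
  exists t j' t', v = Some (i, t, j') /\ j' <> j /\
     u = Some (i, t', j) /\ mulS t (P j' i) = mulS t' (P j i).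

Lemma back1 v w' v' :
  lpath (rees_mul mulS P) (fun _ => True) tau v w' v' -> v' = None ->
  forall w, w' = hat_map iota w -> forall u, R1 v u ->
  lpath (rees_mul mulS P) VT (fun x => tau (iota x)) u w None.
Proof.
  induction 1; intros Hv' w0 Hw u0 HR.
  - subst. destruct w0; simpl in Hw; try discriminate.
    destruct HR as [[<- _]|[t [j' [t' [E _]]]]]; [|discriminate].
    constructor. exact Logic.I.
  - destruct (hat_map_inl _ _ _ _ Hw) as [x0 [w1 [-> [-> ->]]]].
    destruct (Hgen x0) as [s2 Hs2].
    assert (Hm : Some (mul1 (rees_mul mulS P) a (tau (iota x0))) =
                 Some (mul1 (rees_mul mulS P) u0 (tau (iota x0))) /\
                 VT (mul1 (rees_mul mulS P) u0 (tau (iota x0)))).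
    { destruct HR as [[<- Hva]|[t [j' [t' [-> [_ [-> Ht]]]]]]].
      - split; [reflexivity|]. destruct a as [m|]; simpl in *.
        + destruct Hva as [s ->]. rewrite Hs2. simpl. eexists; reflexivity.
        + rewrite Hs2. eexists; reflexivity.
      - simpl. rewrite Hs2. simpl. split.
        + rewrite Ht. reflexivity.
        + eexists; reflexivity. }
    destruct Hm as [Hm1 Hm2].
    apply lp_fwd.
    + destruct HR as [[<- Hva]|[t [j' [t' [_ [_ [-> _]]]]]]]; auto.
      simpl. eexists; reflexivity.
    + exact Hm2.
    + apply IHlpath; auto. rewrite Hm1. left. auto.
  - destruct (hat_map_inr _ _ _ _ Hw) as [x0 [w1 [-> [-> ->]]]].
    destruct (Hgen x0) as [s2 Hs2].
    destruct HR as [[<- Hvb]|[t [j' [t' [E [Hne _]]]]]].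
    2:{ exfalso. injection E as E. destruct a as [[[i1 t1] j1]|]; simpl in E;
        rewrite Hs2 in E; simpl in E; injection E; intros; subst; congruence. }
    simpl in Hvb.
    destruct a as [[[i1 t1] j1]|].
    + simpl in Hvb |- *. rewrite Hs2 in Hvb |- *. simpl in Hvb |- *.
      destruct Hvb as [s3 E]. injection E; intros; subst i1.
      destruct (classic (j1 = j)) as [->|Hne].
      * assert (H' := @lp_bwd _ _ (rees_mul mulS P) VT (fun x => tau (iota x))
                  (Some (i, t1, j)) x0 w1 None).
        simpl in H'. rewrite Hs2 in H'. apply H'.
        -- eexists; reflexivity.
        -- eexists; reflexivity.
        -- apply IHlpath; auto. left. split; auto. eexists; reflexivity.
      * destruct (Hleft j1 t1) as [t' Ht'].
        assert (H' := @lp_bwd _ _ (rees_mul mulS P) VT (fun x => tau (iota x))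
                  (Some (i, t', j)) x0 w1 None).
        simpl in H'. rewrite Hs2 in H'. rewrite Ht'. apply H'.
        -- eexists; reflexivity.
        -- eexists; reflexivity.
        -- apply IHlpath; auto. right. do 3 eexists. repeat split; eauto.
    + simpl. assert (H' := @lp_bwd _ _ (rees_mul mulS P) VT (fun x => tau (iota x))
                  None x0 w1 None). simpl in H'. apply H'.
      * exact Logic.I.
      * eexists; eauto.
      * apply IHlpath; auto. left. split; auto; exact Logic.I.
Qed.
End NoZero.

Theorem theorem5p2 :
  (* Case M = M^0(S; I, J; P) *)
  (forall (S I J : Type) (mulS : S -> S -> S) (P : J -> I -> option S)
     (i : I) (j : J) (X Y : Type) (iota : X -> Y) (tau : Y -> option (I * S * J)),
     associative_op mulS ->
     finitely_generated (rees0_mul mulS P) ->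
     P j i <> None ->
     (forall j' : J, P j' i = None \/
        exists p' p, P j' i = Some p' /\ P j i = Some p /\ left_mult_sub mulS p' p) ->
     (forall x1 x2 : X, iota x1 = iota x2 -> x1 = x2) ->
     generators_of (rees0_mul mulS P) (fun _ => True) tau ->
     generators_of (rees0_mul mulS P)
       (fun m => exists s : S, m = Some (i, s, j)) (fun x => tau (iota x)) ->
     forall w : list (hat X),
       loop_problem (rees0_mul mulS P)
         (fun m => exists s : S, m = Some (i, s, j)) (fun x => tau (iota x)) w
       <-> loop_problem (rees0_mul mulS P) (fun _ => True) tau (hat_map iota w))
  /\
  (* Case M = M(S; I, J; P) *)
  (forall (S I J : Type) (mulS : S -> S -> S) (P : J -> I -> S)
     (i : I) (j : J) (X Y : Type) (iota : X -> Y) (tau : Y -> I * S * J),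
     associative_op mulS ->
     finitely_generated (rees_mul mulS P) ->
     (forall j' : J, left_mult_sub mulS (P j' i) (P j i)) ->
     (forall x1 x2 : X, iota x1 = iota x2 -> x1 = x2) ->
     generators_of (rees_mul mulS P) (fun _ => True) tau ->
     generators_of (rees_mul mulS P)
       (fun m => exists s : S, m = (i, s, j)) (fun x => tau (iota x)) ->
     forall w : list (hat X),
       loop_problem (rees_mul mulS P)
         (fun m => exists s : S, m = (i, s, j)) (fun x => tau (iota x)) w
       <-> loop_problem (rees_mul mulS P) (fun _ => True) tau (hat_map iota w)).
Proof.
  split.
  - intros S I J mulS P i j X Y iota tau Ha _ Hji Hl _ _ [Hg _] w. split; intro H.
    + eapply lpath_transfer; eauto.
    + eapply back0; eauto. left. split; [reflexivity|exact Logic.I].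
  - intros S I J mulS P i j X Y iota tau Ha _ Hl _ _ [Hg _] w. split; intro H.
    + eapply lpath_transfer; eauto.
    + eapply back1; eauto. left. split; [reflexivity|exact Logic.I].
Qed.
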